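(* Let $\mathcal{G}$ be a finite connected undirected simple graph with $N$ nodes which is not a tree, with adjacency matrix $(a_{ij})$ and non-backtracking centralities $x_1,\dots,x_N$. Let $\mathcal{W}$ be the weighted network with weights $w_{ij}=a_{ij}x_ix_j$, strengths $s_i=\sum_k w_{ik}$, total strength $s=\sum_{i,j}w_{ij}$, and Laplacian $\mathbf{L}=\mathbf{S}-\mathbf{W}$ with $\mathbf{S}=\mathrm{diag}(s_1,\dots,s_N)$, $\mathbf{W}=(w_{ij})$. Let $0=\theta_1<\theta_2\le\dots\le\theta_N$ be the eigenvalues of $\mathbf{L}$ with orthonormal eigenvectors $\phi_1,\dots,\phi_N$, $\phi_k=(\phi_{k1},\dots,\phi_{kN})^\top$. Then for the NBCRW on $\mathcal{G}$: (i) the hitting time from node $i$ to node $j$ is $$T_{ij}=\sum_{z=1}^N s_z\sum_{k=2}^N\frac{1}{\theta_k}\left(\phi_{kj}^2-\phi_{ki}\phi_{kj}-\phi_{kj}\phi_{kz}+\phi_{ki}\phi_{kz}\right);$$ (ii) the partial mean hitting time to node $j$ is $$T_j=\frac{N}{N-1}\sum_{k=2}^N\frac{1}{\theta_k}\left(s\,\phi_{kj}^2-\phi_{kj}\sum_{z=1}^N s_z\phi_{kz}\right);$$ (iii) the global mean hitting time is $$\langle T\rangle=\frac{s}{N-1}\sum_{k=2}^N\frac{1}{\theta_k}.$$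
   Context: The non-backtracking matrix $\mathbf{B}$ of $\mathcal{G}$ is the $2E\times 2E$ matrix indexed by directed edges $i\to j$ (each undirected edge gives two directed edges), with $B_{i\to j,\,k\to l}=1$ if $j=k$ and $i\neq l$, and $0$ otherwise; $v=(v_{i\to j})$ is a non-negative eigenvector for its leading (Perron–Frobenius) eigenvalue. The non-backtracking centrality of node $i$ is $x_i=\sum_{j\in\mathcal{N}_i}v_{i\to j}$. The NBCRW is the Markov chain with $p_{ij}=a_{ij}x_j/\sum_k a_{ik}x_k$ (assumed defined). The hitting time $T_{ij}$ ($i\ne j$) is the expected number of steps for the walk started at $i$ to reach $j$ for the first time, with $T_{jj}=0$; the partial mean hitting time is $T_j=\frac{1}{N-1}\sum_{i=1}^N T_{ij}$; the global mean hitting time is $\langle T\rangle=\frac{1}{N(N-1)}\sum_{i}\sum_{j\ne i}T_{ij}$. *)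

(* Defs.v *)
From HB Require Import structures.
From mathcomp Require Import all_boot all_order all_algebra.
From mathcomp Require Import all_classical all_reals all_analysis.
From mathcomp Require Import complex.
Set Implicit Arguments. Unset Strict Implicit. Unset Printing Implicit Defensive.
Import Order.TTheory GRing.Theory Num.Theory.
Import numFieldNormedType.Exports.
Local Open Scope classical_set_scope.
Local Open Scope ring_scope.

Section Defs.
Variable R : realType.
Variable N : nat.
Variable adj : rel 'I_N.

Definition simple_graph := symmetric adj /\ irreflexive adj.
Definition connected_graph := forall i j : 'I_N, connect adj i j.
Definition has_cycle := exists c : seq 'I_N, [/\ (3 <= size c)%N, uniq c & cycle adj c].
Definition is_tree := connected_graph /\ ~ has_cycle.

Definition a (i j : 'I_N) : R := (adj i j)%:R.

Definition dedge := {p : 'I_N * 'I_N | adj p.1 p.2}.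

Definition NB (e f : dedge) : R :=
  (((val e).2 == (val f).1) && ((val e).1 != (val f).2))%:R.

Definition NB_eigenvalue (mu : R[i]) :=
  exists w : dedge -> R[i], (exists e, w e != 0) /\
    forall e, \sum_f ((NB e f)%:C)%C * w f = mu * w e.

(* v is a non-negative eigenvector of B for its leading (Perron-Frobenius)
   eigenvalue lambda, i.e. lambda is a (real) eigenvalue whose modulus dominates
   the modulus of every complex eigenvalue (lambda = spectral radius) *)
Definition NB_leading_eigvec (lambda : R) (v : dedge -> R) :=
  [/\ forall e, 0 <= v e, exists e, v e != 0,
      forall e, \sum_f NB e f * v f = lambda * v e
    & forall mu, NB_eigenvalue mu -> `|mu| <= (lambda%:C)%C].

Definition nbc (v : dedge -> R) (i : 'I_N) : R :=
  \sum_(e : dedge | (val e).1 == i) v e.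

Definition nbcrw (x : 'I_N -> R) (i j : 'I_N) : R :=
  a i j * x j / \sum_k a i k * x k.

(* first-passage probabilities: fpt P n i j = probability that the walk started
   at i reaches j for the first time at step n+1 *)
Fixpoint fpt (P : 'I_N -> 'I_N -> R) (n : nat) (i j : 'I_N) : R :=
  match n with
  | 0 => P i j
  | n'.+1 => \sum_(k | k != j) P i k * fpt P n' k j
  end.

Definition hit_series (P : 'I_N -> 'I_N -> R) (i j : 'I_N) (m : nat) : R :=
  \sum_(n < m) (n.+1)%:R * fpt P n i j.

Definition hitting_time (P : 'I_N -> 'I_N -> R) (i j : 'I_N) : R :=
  if i == j then 0 else lim (hit_series P i j @ \oo).

Definition partial_mean_ht (P : 'I_N -> 'I_N -> R) (j : 'I_N) : R :=
  (N.-1)%:R^-1 * \sum_i hitting_time P i j.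

Definition global_mean_ht (P : 'I_N -> 'I_N -> R) : R :=
  ((N * N.-1)%:R)^-1 * \sum_i \sum_(j | j != i) hitting_time P i j.

Definition wt (x : 'I_N -> R) (i j : 'I_N) : R := a i j * x i * x j.
Definition strength (x : 'I_N -> R) (i : 'I_N) : R := \sum_k wt x i k.
Definition total_strength (x : 'I_N -> R) : R := \sum_i \sum_j wt x i j.
Definition wlap (x : 'I_N -> R) : 'M[R]_N :=
  \matrix_(i, j) ((i == j)%:R * strength x i - wt x i j).

End Defs.

(* Main.v *)
Require Import Defs.
From HB Require Import structures.
From mathcomp Require Import all_boot all_order all_algebra.
From mathcomp Require Import all_classical all_reals all_analysis.
From mathcomp Require Import complex.
From mathcomp Require Import ring lra zify.
Import Order.TTheory GRing.Theory Num.Theory.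
Import numFieldNormedType.Exports.
Local Open Scope classical_set_scope.
Local Open Scope ring_scope.
Definition Qop {R : realType} {N : nat} (P : 'I_N -> 'I_N -> R) (j : 'I_N)
  (y : 'I_N -> R) (k : 'I_N) : R :=
  if k == j then 0 else \sum_(l | l != j) P k l * y l.

Definition ep {R : realType} {N : nat} (j : 'I_N) (k : 'I_N) : R := (k != j)%:R.

Lemma Qop_add (R : realType) (N : nat) (P : 'I_N -> 'I_N -> R) (j : 'I_N) y z :
  Qop P j (fun k => y k + z k) = (fun k => Qop P j y k + Qop P j z k).
Proof.
apply: funext => k; rewrite /Qop; case: ifP => _; first by rewrite addr0.
by rewrite -big_split /=; apply: eq_bigr => l _; rewrite mulrDr.
Qed.

Lemma Qop_scale (R : realType) (N : nat) (P : 'I_N -> 'I_N -> R) (j : 'I_N) c y :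
  Qop P j (fun k => c * y k) = (fun k => c * Qop P j y k).
Proof.
apply: funext => k; rewrite /Qop; case: ifP => _; first by rewrite mulr0.
by rewrite mulr_sumr; apply: eq_bigr => l _; rewrite mulrCA.
Qed.

Lemma Qop_le (R : realType) (N : nat) (P : 'I_N -> 'I_N -> R) (j : 'I_N) y z :
  (forall k l, 0 <= P k l) -> (forall k, y k <= z k) -> forall k, Qop P j y k <= Qop P j z k.
Proof.
move=> HP Hyz k; rewrite /Qop; case: ifP => _ //.
by apply: ler_sum => l _; apply: ler_wpM2l.
Qed.

Lemma iter_add (R : realType) (N : nat) (P : 'I_N -> 'I_N -> R) (j : 'I_N) n y z :
  iter n (Qop P j) (fun k => y k + z k) =
  (fun k => iter n (Qop P j) y k + iter n (Qop P j) z k).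
Proof.
elim: n => [|n IH] //=; by rewrite IH Qop_add.
Qed.

Lemma iter_scale (R : realType) (N : nat) (P : 'I_N -> 'I_N -> R) (j : 'I_N) n c y :
  iter n (Qop P j) (fun k => c * y k) = (fun k => c * iter n (Qop P j) y k).
Proof.
elim: n => [|n IH] //=; by rewrite IH Qop_scale.
Qed.

Lemma iter_le (R : realType) (N : nat) (P : 'I_N -> 'I_N -> R) (j : 'I_N) n y z :
  (forall k l, 0 <= P k l) -> (forall k, y k <= z k) ->
  forall k, iter n (Qop P j) y k <= iter n (Qop P j) z k.
Proof.
move=> HP; elim: n y z => [|n IH] y z Hyz k; first exact: Hyz.
rewrite /=.
apply: Qop_le => // l; exact: IH.
Qed.

Lemma iter_ge0 (R : realType) (N : nat) (P : 'I_N -> 'I_N -> R) (j : 'I_N) n y :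
  (forall k l, 0 <= P k l) -> (forall k, 0 <= y k) ->
  forall k, 0 <= iter n (Qop P j) y k.
Proof.
move=> HP Hy k.
have Z : iter n (Qop P j) (fun _ => 0) = (fun _ => 0).
  elim: n => //= n ->; apply: funext => l; rewrite /Qop; case: ifP => // _.
  by rewrite big1 // => l' _; rewrite mulr0.
have -> : (0 : R) = iter n (Qop P j) (fun _ => 0) k by rewrite Z.
exact: iter_le.
Qed.

Lemma unfold_eq (R : realType) (N : nat) (P : 'I_N -> 'I_N -> R) (j : 'I_N) b y :
  (forall k, y k = b k + Qop P j y k) ->
  forall m k, y k = \sum_(n < m) iter n (Qop P j) b k + iter m (Qop P j) y k.
Proof.
move=> Hy; have Ey : y = (fun k => b k + Qop P j y k) by apply: funext.
elim=> [|m IH] k; first by rewrite big_ord0 add0r.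
rewrite IH big_ord_recr -addrA; congr (_ + _).
by rewrite {1}Ey iter_add iterSr.
Qed.

Lemma min_principle (R : realType) (N : nat) (P : 'I_N -> 'I_N -> R) (j : 'I_N) b y :
  (forall k l, 0 <= P k l) -> (forall k, \sum_l P k l = 1) ->
  (forall k, k != j -> 1 <= b k) -> 0 <= b j ->
  (forall k, y k = b k + Qop P j y k) -> forall k, 0 <= y k.
Proof.
move=> HP0 HP1 Hb Hbj Hy.
have [k0 Hk0] : exists k0, forall k, y k0 <= y k.
  case: (@arg_minP _ _ _ j predT y) => // k0 _ H; exists k0 => k; exact: H.
suff : 0 <= y k0 by move=> H k; apply: le_trans H (Hk0 k).
rewrite leNgt; apply/negP => Hneg.
have Hy0 := Hy k0; rewrite /Qop in Hy0.
case: (eqVneq k0 j) => [E|Hne].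
  by move: Hneg; rewrite Hy0 E eqxx addr0 ltNge Hbj.
rewrite (negbTE Hne) in Hy0.
have H1 : (\sum_(l | l != j) P k0 l * y l) >= (\sum_(l | l != j) P k0 l) * y k0.
  by rewrite mulr_suml; apply: ler_sum => l _; apply: ler_wpM2l.
have H2 : \sum_(l | l != j) P k0 l <= 1.
  by rewrite -(HP1 k0) [X in _ <= X](bigD1 j) //= lerDr.
have H3 : 0 <= \sum_(l | l != j) P k0 l by apply: sumr_ge0 => l _.
have H4 := Hb k0 Hne.
set t := \sum_(l | l != j) P k0 l in H1 H2 H3.
set u := \sum_(l | l != j) P k0 l * y l in Hy0 H1.
nra.
Qed.
Definition gseq {R : realType} {N : nat} (P : 'I_N -> 'I_N -> R) (j : 'I_N) n :=
  iter n (Qop P j) (ep j).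

Lemma fpt_g (R : realType) (N : nat) (P : 'I_N -> 'I_N -> R) (j : 'I_N) :
  (forall k, \sum_l P k l = 1) ->
  forall n k, k != j -> fpt P n k j = gseq P j n k - gseq P j n.+1 k.
Proof.
move=> HP1; elim=> [|n IH] k Hk.
  rewrite /gseq /= /Qop /ep (negbTE Hk) /=.
  have E := HP1 k; rewrite (bigD1 j) //= in E.
  rewrite (eq_bigr (fun l => P k l)); first by rewrite -E addrK.
  by move=> l Hl; rewrite Hl mulr1.
have -> : gseq P j n.+2 k = Qop P j (gseq P j n.+1) k by [].
have -> : gseq P j n.+1 k = Qop P j (gseq P j n) k by [].
rewrite [in RHS]/Qop (negbTE Hk) -sumrB [in LHS]/=.
by apply: eq_bigr => l Hl; rewrite IH // mulrBr.
Qed.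

Lemma tri_sum (m : nat) : ((\sum_(n < m) (m - n)%N)%N.*2 = (m * m.+1)%N)%N.
Proof.
elim: m => [|m IH]; first by rewrite big_ord0.
rewrite big_ord_recl /= subn0.
have -> : (\sum_(i < m) (m.+1 - bump 0 i)%N)%N = (\sum_(i < m) (m - i)%N)%N.
  by apply: eq_bigr => i _; rewrite /bump /= add1n subSS.
by rewrite doubleD IH; lia.
Qed.

Lemma hit_lim (R : realType) (N : nat) (P : 'I_N -> 'I_N -> R) (j : 'I_N) h h2 :
  (forall k l, 0 <= P k l) -> (forall k, \sum_l P k l = 1) ->
  h j = 0 -> (forall k, h k = ep j k + Qop P j h k) ->
  h2 j = 0 -> (forall k, h2 k = h k + Qop P j h2 k) ->
  forall i, i != j -> hit_series P i j @ \oo --> h i.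
Proof.
move=> HP0 HP1 hj Hh h2j Hh2 i Hij.
have ep0 : forall k, 0 <= ep j k :> R by move=> k; rewrite /ep ler0n.
have hpos : forall k, 0 <= h k.
  apply: (@min_principle _ _ P j (ep j) h HP0 HP1 _ _ Hh) => [k Hk|]; by rewrite /ep ?Hk ?eqxx.
have hge : forall k, k != j -> 1 <= h k.
  move=> k Hk; rewrite Hh /ep Hk lerDl.
  exact: (@iter_ge0 _ _ P j 1 h HP0 hpos k).
have h2pos : forall k, 0 <= h2 k.
  by apply: (@min_principle _ _ P j h h2 HP0 HP1 hge _ Hh2); rewrite hj.
have gpos : forall n k, 0 <= gseq P j n k by move=> n k; exact: iter_ge0.
have gdec : forall n k, gseq P j n.+1 k <= gseq P j n k.
  move=> n k; rewrite /gseq iterSr; apply: iter_le => // l.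
  rewrite /Qop /ep; case: ifP => [_|Hl]; first by rewrite ler0n.
  rewrite (eq_bigr (fun l' => P l l')); last by move=> l' ->; rewrite mulr1.
  have E := HP1 l; rewrite (bigD1 j) //= in E.
  apply: (@le_trans _ _ (P l j + \sum_(l' < N | l' != j) P l l')).
    by rewrite lerDr.
  by rewrite E.
have gmono : forall d p k, gseq P j (p + d) k <= gseq P j p k.
  elim=> [|d IH] p k; first by rewrite addn0.
  by rewrite addnS; apply: le_trans (gdec _ _) (IH p k).
have sum_g_le : forall m k, \sum_(n < m) gseq P j n k <= h k.
  move=> m k; rewrite [X in _ <= X](@unfold_eq _ _ P j (ep j) h Hh m k) /gseq lerDl.
  exact: iter_ge0.
have mg_le : forall m k, m%:R * gseq P j m k <= h k.
  move=> m k; apply: le_trans (sum_g_le m k).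
  have : \sum_(n < m) gseq P j m k <= \sum_(n < m) gseq P j n k.
    apply: ler_sum => n _; have := gmono (m - n)%N n k.
    by rewrite subnKC // ltnW // ltn_ord.
  by rewrite sumr_const card_ord mulr_natl.
have sumQh_le : forall m k, \sum_(n < m) iter n (Qop P j) h k <= h2 k.
  move=> m k; rewrite [X in _ <= X](@unfold_eq _ _ P j h h2 Hh2 m k) lerDl.
  exact: iter_ge0.
have Qh_ge : forall n d k, d%:R * gseq P j (n + d) k <= iter n (Qop P j) h k.
  move=> n d k.
  have := @iter_le _ _ P j n (fun k => d%:R * gseq P j d k) h HP0 (fun k => mg_le d k) k.
  by rewrite iter_scale /gseq -iterD.
have mmg : forall m k, (m * m.+1)%:R * gseq P j m k <= 2 * h2 k.
  move=> m k.
  have S : \sum_(n < m) (m - n)%:R * gseq P j m k <= h2 k.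
    apply: le_trans (sumQh_le m k); apply: ler_sum => n _.
    by have := Qh_ge n (m - n)%N k; rewrite subnKC // ltnW.
  rewrite -mulr_suml -natr_sum in S.
  rewrite -(tri_sum m) -muln2 natrM mulrAC.
  set t := _ * gseq P j m k in S *; lra.
have Qhmono : forall d n k, iter (n + d) (Qop P j) h k <= iter n (Qop P j) h k.
  elim=> [|d IH] n k; first by rewrite addn0.
  rewrite addnS; apply: le_trans (IH n k).
  rewrite iterSr; apply: iter_le => // l.
  by have := Hh l; have := ep0 l; lra.
have Qh_bound : forall m k, m.+1%:R * iter m (Qop P j) h k <= h2 k.
  move=> m k; apply: le_trans (sumQh_le m.+1 k).
  have : \sum_(n < m.+1) iter m (Qop P j) h k <= \sum_(n < m.+1) iter n (Qop P j) h k.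
    apply: ler_sum => n _; have := Qhmono (m - n)%N n k.
    by rewrite subnKC // -ltnS ltn_ord.
  by rewrite sumr_const card_ord mulr_natl.
have series_eq : forall m, hit_series P i j m =
    \sum_(n < m) gseq P j n i - m%:R * gseq P j m i.
  elim=> [|m IH]; first by rewrite /hit_series !big_ord0 mul0r subr0.
  rewrite /hit_series big_ord_recr /= -/(hit_series P i j m) IH big_ord_recr /=.
  rewrite (@fpt_g _ _ P j HP1 _ _ Hij) -addn1 natrD.
  have -> : gseq P j (m + 1) i = Qop P j (gseq P j m) i by rewrite addn1.
  ring.
have bnd : forall m, h i - 3 * h2 i * harmonic m <= hit_series P i j m <= h i.
  move=> m; rewrite series_eq.
  have U : h i = \sum_(n < m) gseq P j n i + iter m (Qop P j) h i :=
    @unfold_eq _ _ P j (ep j) h Hh m i.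
  have t0 : 0 < m.+1%:R :> R by rewrite ltr0n.
  have A : iter m (Qop P j) h i <= h2 i / m.+1%:R.
    by rewrite ler_pdivlMr // mulrC; apply: Qh_bound.
  have B : m%:R * gseq P j m i <= 2 * h2 i / m.+1%:R.
    by rewrite ler_pdivlMr // mulrAC -natrM; apply: mmg.
  have C : 0 <= iter m (Qop P j) h i by apply: iter_ge0.
  have D : 0 <= m%:R * gseq P j m i by apply: mulr_ge0; rewrite ?ler0n ?gpos.
  rewrite /harmonic /=.
  rewrite -[3 * h2 i / _]mulrA; rewrite -[2 * h2 i / _]mulrA in B.
  set u := h2 i / _ in A B *.
  apply/andP; split; lra.
apply: (@squeeze_cvgr _ _ _ _ (fun m => h i - 3 * h2 i * harmonic m) (fun _ => h i)).
- by apply: nearW => m; exact: bnd m.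
- have H : (fun m => h i - 3 * h2 i * harmonic m) @ \oo --> h i - 3 * h2 i * 0.
    apply: cvgB; first exact: cvg_cst.
    apply: cvgMl_tmp; exact: cvg_harmonic.
  by rewrite mulr0 subr0 in H.
- exact: cvg_cst.
Qed.
Definition Kf {R : realType} {N : nat} (phi : 'M[R]_N) (theta : 'I_N -> R) (i l : 'I_N) : R :=
  \sum_(k < N | (0 < k)%N) (theta k)^-1 * (phi k i * phi k l).

Lemma spec_facts (R : realType) (N : nat) (L phi : 'M[R]_N) (theta : 'I_N -> R) (k0 : 'I_N) :
  val k0 = 0%N ->
  (forall i, \sum_l L i l = 0) -> (forall l, \sum_i L i l = 0) ->
  phi *m phi^T = 1%:M ->
  (forall k i, \sum_l L i l * phi k l = theta k * phi k i) ->
  (forall k : 'I_N, (0 < k)%N -> 0 < theta k) ->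
  [/\ (forall i l, \sum_k phi k i * phi k l = (i == l)%:R),
      (forall k, \sum_i phi k i * phi k i = 1),
      (forall k : 'I_N, (0 < k)%N -> \sum_i phi k i = 0),
      (forall i m, \sum_(k < N | (0 < k)%N) phi k i * phi k m = (i == m)%:R - N%:R^-1)
    & (forall i m, \sum_l L i l * Kf phi theta l m = (i == m)%:R - N%:R^-1)].
Proof.
move=> Hk0 HLr HLc Hphi Heig Hth.
have E0 : forall k : 'I_N, (0 < k)%N = (k != k0).
  move=> k; rewrite lt0n; congr (~~ _); apply/eqP/eqP => [H|->]; last exact: Hk0.
  by apply: val_inj => /=; rewrite H Hk0.
have orth : forall i l, \sum_k phi k i * phi k l = (i == l)%:R.
  move=> i l; have /matrixP/(_ i l) := mulmx1C Hphi.
  by rewrite !mxE => <-; apply: eq_bigr => k _; rewrite mxE.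
have rown : forall k, \sum_i phi k i * phi k i = 1.
  move=> k; have /matrixP/(_ k k) := Hphi.
  by rewrite !mxE eqxx mulr1n => <-; apply: eq_bigr => i _; rewrite mxE.
have C1 : forall k : 'I_N, (0 < k)%N -> \sum_i phi k i = 0.
  move=> k Hk; have Ht := Hth k Hk.
  have : theta k * \sum_i phi k i = 0.
    rewrite mulr_sumr (eq_bigr (fun i => \sum_l L i l * phi k l)); last by move=> i _; rewrite Heig.
    rewrite exchange_big /= big1 // => l _; by rewrite -mulr_suml HLc mul0r.
  by move/eqP; rewrite mulf_eq0 (gt_eqF Ht) /= => /eqP.
set u := \sum_i phi k0 i.
have Hu : forall i, phi k0 i * u = 1.
  move=> i; have H : \sum_l \sum_k phi k i * phi k l = 1.
    rewrite (eq_bigr (fun l => (i == l)%:R)); last by move=> l _; rewrite orth.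
    rewrite (bigD1 i) //= eqxx big1 ?addr0 // => l Hl; by rewrite eq_sym (negbTE Hl).
  rewrite exchange_big /= (bigD1 k0) //= in H.
  have Z : \sum_(k < N | k != k0) \sum_l phi k i * phi k l = 0.
    by apply: big1 => k Hk; rewrite -mulr_sumr C1 ?mulr0 // E0.
  by rewrite Z addr0 -mulr_sumr in H.
have Nu : u ^+ 2 = N%:R.
  have := rown k0; move/(congr1 (fun t => t * u ^+ 2)); rewrite mul1r => <-.
  have -> : N%:R = \sum_(i < N) (1 : R) by rewrite sumr_const card_ord.
  rewrite mulr_suml.
  apply: eq_bigr => i _; have := Hu i; rewrite expr2 => H.
  by rewrite mulrACA H mul1r.
have u0 : u != 0.
  apply/negP => /eqP H0; have := Hu k0; rewrite H0 mulr0 => /eqP; rewrite eq_sym oner_eq0.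
  done.
have C2 : forall i m, \sum_(k < N | (0 < k)%N) phi k i * phi k m = (i == m)%:R - N%:R^-1.
  move=> i m; rewrite -orth [in RHS](bigD1 k0) //=.
  rewrite (eq_bigl (fun k => k != k0)); last by move=> k; rewrite E0.
  suff -> : phi k0 i * phi k0 m = N%:R^-1 by rewrite addrAC subrr add0r.
  have H1 : phi k0 i * phi k0 m * u ^+ 2 = (phi k0 i * u) * (phi k0 m * u) by ring.
  rewrite !Hu mulr1 in H1.
  rewrite -Nu; apply: (mulIf (expf_neq0 2 u0)); by rewrite H1 mulVf // expf_neq0.
split=> //.
move=> i m; rewrite /Kf.
rewrite (eq_bigr (fun l => \sum_(k < N | (0 < k)%N) L i l * ((theta k)^-1 * (phi k l * phi k m)))); last by move=> l _; rewrite mulr_sumr.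
rewrite exchange_big /= -C2; apply: eq_bigr => k Hk.
rewrite (eq_bigr (fun l => (theta k)^-1 * phi k m * (L i l * phi k l))); last by move=> l _; ring.
rewrite -mulr_sumr Heig.
have := Hth k Hk => Ht.
by field; rewrite gt_eqF.
Qed.
Definition yv {R : realType} {N : nat} (phi : 'M[R]_N) (theta : 'I_N -> R)
  (c : 'I_N -> R) (j i : 'I_N) : R :=
  \sum_z c z * (Kf phi theta j j - Kf phi theta i j - Kf phi theta j z + Kf phi theta i z).

Lemma yv_jj (R : realType) (N : nat) (phi : 'M[R]_N) theta c j : yv phi theta c j j = 0.
Proof.
rewrite /yv big1 // => z _.
set a := Kf _ _ j j; set b := Kf _ _ j z.
by rewrite (_ : a - a - b + b = 0) ?mulr0 //; ring.
Qed.

Lemma Ly (R : realType) (N : nat) (L phi : 'M[R]_N) (theta : 'I_N -> R) c j i :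
  (forall i, \sum_l L i l = 0) ->
  (forall i m, \sum_l L i l * Kf phi theta l m = (i == m)%:R - N%:R^-1) ->
  \sum_l L i l * yv phi theta c j l = c i - (i == j)%:R * \sum_z c z.
Proof.
move=> HLr C3; rewrite /yv.
rewrite (eq_bigr (fun l => \sum_z L i l * (c z * (Kf phi theta j j - Kf phi theta l j
   - Kf phi theta j z + Kf phi theta l z)))); last by move=> l _; rewrite mulr_sumr.
rewrite exchange_big /=.
rewrite (eq_bigr (fun z => c z * (i == z)%:R - (i == j)%:R * c z)); last first.
  move=> z _.
  rewrite (eq_bigr (fun l => c z * Kf phi theta j j * L i l - c z * (L i l * Kf phi theta l j)
     - c z * Kf phi theta j z * L i l + c z * (L i l * Kf phi theta l z))); last by move=> l _; ring.
  rewrite !(big_split, sumrB) /= !sumrN -!mulr_sumr HLr !C3; ring.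
rewrite sumrB -mulr_sumr; congr (_ - _).
rewrite (bigD1 i) //= eqxx mulr1 big1 ?addr0 // => z Hz.
by rewrite eq_sym (negbTE Hz) mulr0.
Qed.

Lemma formula_yv (R : realType) (N : nat) (phi : 'M[R]_N) (theta : 'I_N -> R) c i j :
  \sum_z c z * \sum_(k < N | (0 < k)%N) (theta k)^-1 *
           (phi k j ^+ 2 - phi k i * phi k j - phi k j * phi k z + phi k i * phi k z)
  = yv phi theta c j i.
Proof.
rewrite /yv; apply: eq_bigr => z _; congr (_ * _).
rewrite /Kf -!sumrB -big_split /=; apply: eq_bigr => k _; ring.
Qed.
Theorem theorem3 (R : realType) (N : nat) (adj : rel 'I_N)
    (lambda : R) (v : dedge adj -> R) (theta : 'I_N -> R) (phi : 'M[R]_N) :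
  simple_graph adj -> connected_graph adj -> ~ is_tree adj ->
  NB_leading_eigvec lambda v ->
  let x := nbc v in
  let P := nbcrw adj x in
  (forall i : 'I_N, \sum_k @a R N adj i k * x k != 0) ->
  phi *m phi^T = 1%:M ->
  (forall k : 'I_N, wlap adj x *m (row k phi)^T = theta k *: (row k phi)^T) ->
  (forall k l : 'I_N, (k <= l)%N -> theta k <= theta l) ->
  (forall k : 'I_N, val k = 0%N -> theta k = 0) ->
  (forall k : 'I_N, val k = 1%N -> 0 < theta k) ->
  let s := strength adj x in
  [/\ (forall i j : 'I_N, i != j -> cvg (hit_series P i j @ \oo)),
      (forall i j : 'I_N, hitting_time P i j =
         \sum_z s z * \sum_(k < N | (0 < k)%N) (theta k)^-1 *
           (phi k j ^+ 2 - phi k i * phi k j - phi k j * phi k z + phi k i * phi k z)),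
      (forall j : 'I_N, partial_mean_ht P j =
         N%:R / (N.-1)%:R * \sum_(k < N | (0 < k)%N) (theta k)^-1 *
           (total_strength adj x * phi k j ^+ 2 - phi k j * \sum_z s z * phi k z))
    & global_mean_ht P =
         total_strength adj x / (N.-1)%:R * \sum_(k < N | (0 < k)%N) (theta k)^-1].
Proof.
move=> Hsg Hcon Hnt Hv x P HD Hphi Heig Hmono Hth0 Hth1 s.
have N2 : (2 <= N)%N.
  case: (leqP 2 N) => // HN; exfalso; apply: Hnt; split => //.
  case=> c [Hs Hu _]; have := max_card (mem c); rewrite card_ord.
  by move/card_uniqP: Hu => ->; rewrite leqNgt (ltn_trans HN Hs).
have N0 : (0 < N)%N by lia.
have N1 : (1 < N)%N by lia.
pose k0 := Ordinal N0; pose k1 := Ordinal N1.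
have Hth : forall k : 'I_N, (0 < k)%N -> 0 < theta k.
  move=> k Hk; apply: lt_le_trans (Hth1 k1 erefl) (Hmono k1 k Hk).
have a0 : forall i l, 0 <= @a R N adj i l by move=> i l; rewrite /a ler0n.
have x0 : forall i, 0 <= x i.
  by move=> i; rewrite /x /nbc; apply: sumr_ge0 => e _; case: Hv => H _ _ _; apply: H.
pose D i := \sum_k @a R N adj i k * x k.
have D0 : forall i, 0 < D i.
  move=> i; rewrite lt_def HD /=; apply: sumr_ge0 => l _; exact: mulr_ge0.
pose L := wlap adj x.
have LE : forall i l, L i l = (i == l)%:R * s i - wt adj x i l by move=> i l; rewrite /L /wlap mxE.
have HLr : forall i, \sum_l L i l = 0.
  move=> i; rewrite (eq_bigr _ (fun l _ => LE i l)) sumrB (bigD1 i) //= eqxx mul1r.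
  rewrite big1 ?addr0 /s /strength ?subrr // => l Hl; by rewrite eq_sym (negbTE Hl) mul0r.
have wsym : forall i l, wt adj x i l = wt adj x l i.
  move=> i l; rewrite /wt /a; case: Hsg => Hs _; rewrite Hs; ring.
have HLc : forall l, \sum_i L i l = 0.
  move=> l; rewrite (eq_bigr _ (fun i _ => LE i l)) sumrB (bigD1 l) //= eqxx mul1r.
  rewrite big1 ?addr0; last by move=> i Hi; rewrite (negbTE Hi) mul0r.
  rewrite /s /strength (eq_bigr _ (fun i _ => wsym i l)); exact: subrr.
have Heig' : forall k i, \sum_l L i l * phi k l = theta k * phi k i.
  move=> k i; have /matrixP/(_ i ord0) := Heig k; rewrite !mxE => <-.
  by apply: eq_bigr => l _; rewrite !mxE.
have [orth rown C1 C2 C3] := @spec_facts R N L phi theta k0 erefl HLr HLc Hphi Heig' Hth.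
have xpos : forall i, 0 < x i.
  move=> i; rewrite lt_def x0 andbT; apply/negP => /eqP Hx.
  have wz : forall l, wt adj x i l = 0 by move=> l; rewrite /wt Hx mulr0 mul0r.
  have sz : s i = 0 by rewrite /s /strength big1.
  have Lz : forall l, L i l = 0 by move=> l; rewrite LE sz wz mulr0 subr0.
  have phz : forall k : 'I_N, (0 < k)%N -> phi k i = 0.
    move=> k Hk; have := Heig' k i; rewrite big1 => [H|l _]; last by rewrite Lz mul0r.
    by move/esym/eqP: H; rewrite mulf_eq0 (gt_eqF (Hth k Hk)) /= => /eqP.
  have := C2 i i; rewrite big1 => [|k Hk]; last by rewrite phz // mul0r.
  rewrite eqxx => /eqP; rewrite eq_sym subr_eq0 eq_sym invr_eq1 pnatr_eq1 => /eqP HN1.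
  by move: N2; rewrite HN1.
have sE : forall i, s i = x i * D i.
  by move=> i; rewrite /s /strength /D mulr_sumr; apply: eq_bigr => k _; rewrite /wt; ring.
have HP0 : forall i l, 0 <= P i l.
  move=> i l; rewrite /P /nbcrw; apply: divr_ge0; first exact: mulr_ge0.
  exact: ltW (D0 i).
have HP1 : forall i, \sum_l P i l = 1.
  by move=> i; rewrite /P /nbcrw -mulr_suml mulfV.
have wE : forall i l, wt adj x i l = x i * D i * P i l.
  move=> i l; rewrite /P /nbcrw /wt /D; field; exact: HD.
have key : forall c b j, b j = 0 -> (forall i, i != j -> c i = s i * b i) ->
   forall k, yv phi theta c j k = b k + Qop P j (yv phi theta c j) k.
  move=> c b j bj Hc k; case: (eqVneq k j) => [->|Hk].
    by rewrite yv_jj bj /Qop eqxx addr0.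
  rewrite /Qop (negbTE Hk).
  have := @Ly R N L phi theta c j k HLr C3; rewrite (negbTE Hk) mul0r subr0 Hc //.
  set y := yv phi theta c j.
  rewrite (eq_bigr (fun l => (k == l)%:R * s k * y l - x k * D k * (P k l * y l))); last first.
    by move=> l _; rewrite LE wE; ring.
  rewrite sumrB (bigD1 k) //= eqxx mul1r big1 ?addr0; last first.
    by move=> l Hl; rewrite eq_sym (negbTE Hl) !mul0r.
  rewrite -mulr_sumr sE => H.
  have Hsum : \sum_l P k l * y l = \sum_(l | l != j) P k l * y l.
    by rewrite (bigD1 j) //= /y yv_jj mulr0 add0r.
  rewrite -Hsum.
  have Hxd : x k * D k != 0 by rewrite mulf_neq0 // gt_eqF.
  by apply: (mulfI Hxd); rewrite mulrDr -H; ring.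
have Hh : forall j k, yv phi theta s j k = ep j k + Qop P j (yv phi theta s j) k.
  move=> j; apply: key; first by rewrite /ep eqxx.
  by move=> i Hi; rewrite /ep Hi mulr1.
have Hh2 : forall j k, yv phi theta (fun z => s z * yv phi theta s j z) j k =
    yv phi theta s j k + Qop P j (yv phi theta (fun z => s z * yv phi theta s j z) j) k.
  by move=> j; apply: key; first exact: yv_jj.
have lim_eq : forall i j, i != j -> hit_series P i j @ \oo --> yv phi theta s j i.
  move=> i j Hij.
  exact: (@hit_lim R N P j _ _ HP0 HP1 (yv_jj _ _ _ _ _ _) (Hh j) (yv_jj _ _ _ _ _ _) (Hh2 j) i Hij).
have HT : forall i j, hitting_time P i j = yv phi theta s j i.
  move=> i j; rewrite /hitting_time; case: eqVneq => [->|Hij]; first by rewrite yv_jj.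
  by apply: cvg_lim => //; exact: lim_eq.
have C4 : forall l, \sum_i Kf phi theta i l = 0.
  move=> l; rewrite /Kf exchange_big /=; apply: big1 => k Hk.
  rewrite (eq_bigr (fun i => (theta k)^-1 * phi k l * phi k i)); last by move=> i _; ring.
  by rewrite -mulr_sumr C1 // mulr0.
have Stot : \sum_z s z = total_strength adj x by [].
have sumT : forall j, \sum_i yv phi theta s j i =
    N%:R * (total_strength adj x * Kf phi theta j j - \sum_z s z * Kf phi theta j z).
  move=> j; rewrite /yv exchange_big /=.
  rewrite (eq_bigr (fun z => N%:R * (s z * Kf phi theta j j) - N%:R * (s z * Kf phi theta j z))).
    by rewrite sumrB -!mulr_sumr -mulr_suml Stot mulrBr.
  move=> z _; rewrite -mulr_sumr !(big_split, sumrB) /= !sumrN !C4 !sumr_const card_ord.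
  rewrite -[Kf phi theta j j *+ N]mulr_natl -[Kf phi theta j z *+ N]mulr_natl; ring.
have conv : forall j, \sum_(k < N | (0 < k)%N) (theta k)^-1 *
      (total_strength adj x * phi k j ^+ 2 - phi k j * \sum_z s z * phi k z) =
    total_strength adj x * Kf phi theta j j - \sum_z s z * Kf phi theta j z.
  move=> j.
  have A : total_strength adj x * Kf phi theta j j = \sum_(k < N | (0 < k)%N)
      (theta k)^-1 * (total_strength adj x * phi k j ^+ 2).
    by rewrite /Kf mulr_sumr; apply: eq_bigr => k _; rewrite expr2; ring.
  have B : \sum_z s z * Kf phi theta j z = \sum_(k < N | (0 < k)%N)
      (theta k)^-1 * (phi k j * \sum_z s z * phi k z).
    rewrite /Kf (eq_bigr (fun z => \sum_(k < N | (0 < k)%N) s z * ((theta k)^-1 * (phi k j * phi k z))));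
      last by move=> z _; rewrite mulr_sumr.
    rewrite exchange_big /=; apply: eq_bigr => k _; rewrite !mulr_sumr; apply: eq_bigr => z _; ring.
  by rewrite A B -sumrB; apply: eq_bigr => k _; ring.
have NR : N%:R != 0 :> R by rewrite pnatr_eq0 -lt0n.
have NR1 : (N.-1)%:R != 0 :> R by rewrite pnatr_eq0 -lt0n; lia.
split.
- by move=> i j Hij; apply: cvgP (lim_eq i j Hij).
- by move=> i j; rewrite HT formula_yv.
- move=> j; rewrite /partial_mean_ht (eq_bigr _ (fun i _ => HT i j)) sumT conv.
  by rewrite mulrA [_ * N%:R]mulrC.
- rewrite /global_mean_ht.
  have E1 : forall i, \sum_(j | j != i) hitting_time P i j = \sum_j hitting_time P i j.
    by move=> i; rewrite [RHS](bigD1 i) //= HT yv_jj add0r.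
  rewrite (eq_bigr _ (fun i _ => E1 i)) exchange_big /=.
  rewrite (eq_bigr _ (fun j _ => (eq_bigr _ (fun i _ => HT i j)))).
  rewrite (eq_bigr _ (fun j _ => sumT j)) -mulr_sumr sumrB -mulr_sumr.
  have E2 : \sum_j Kf phi theta j j = \sum_(k < N | (0 < k)%N) (theta k)^-1.
    rewrite /Kf exchange_big /=; apply: eq_bigr => k _.
    by rewrite -mulr_sumr rown mulr1.
  have E3 : \sum_j \sum_z s z * Kf phi theta j z = 0.
    rewrite exchange_big /= big1 // => z _; by rewrite -mulr_sumr C4 mulr0.
  rewrite E2 E3 subr0 natrM invfM; field.
  by rewrite NR NR1.
Qed.
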